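(* Let $E^2$ denote the Stokes operator in tangent sphere coordinates $(\mu,\nu,\varphi)$, acting on functions $\psi(\mu,\nu)$ with $\mu>0$, $\nu\in\mathbb{R}$, by $$E^2\psi=(\mu^2+\nu^2)^2\left[\frac{\partial^2\psi}{\partial \mu^2}+\frac{\mu^2-\nu^2}{\mu(\mu^2+\nu^2)}\frac{\partial\psi}{\partial \mu}+\frac{2\nu}{\mu^2+\nu^2}\frac{\partial\psi}{\partial \nu}+\frac{\partial^2\psi}{\partial \nu^2}\right].$$ Then the equation $E^2\psi=0$ $R$-separates variables with $R(\mu,\nu)=\sqrt{\mu^2+\nu^2}$: for twice differentiable, nowhere vanishing $M$ and $N$, the function $\psi(\mu,\nu)=\frac{1}{\sqrt{\mu^2+\nu^2}}M(\mu)N(\nu)$ satisfies $E^2\psi=0$ if and only if there is a constant $\lambda$ with $$\frac{M''}{M}-\frac{1}{\mu}\frac{M'}{M}=\lambda=-\frac{N''}{N}.$$ Moreover, for $\lambda=n^2>0$ the solutions are exactly $$M(\mu)=c_1\mu I_1(n\mu)+c_2\mu K_1(n\mu),\qquad N(\nu)=c_3\cos(n\nu)+c_4\sin(n\nu),$$ with arbitrary constants $c_1,\dots,c_4$; in particular every function $\psi(\mu,\nu)=\frac{1}{\sqrt{\mu^2+\nu^2}}\big[c_1\mu I_1(n\mu)+c_2\mu K_1(n\mu)\big]\big[c_3\cos(n\nu)+c_4\sin(n\nu)\big]$ with $n>0$ satisfies $E^2\psi=0$.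
   Context: Tangent sphere coordinates $(\mu,\nu,\varphi)$, $\mu>0$, $\nu\in\mathbb{R}$, $\varphi\in[0,2\pi)$, are given by $x=\frac{\mu\cos\varphi}{\mu^2+\nu^2}$, $y=\frac{\mu\sin\varphi}{\mu^2+\nu^2}$, $z=\frac{\nu}{\mu^2+\nu^2}$. For a rotational coordinate system $x=\rho(q_1,q_2)\cos\varphi$, $y=\rho(q_1,q_2)\sin\varphi$, $z=z(q_1,q_2)$, with $h_i=\big((\partial_{q_i}\rho)^2+(\partial_{q_i}z)^2\big)^{-1/2}$ and $\varpi=|\rho|$, the Stokes operator is $E^2=h_1h_2\varpi\big[\partial_{q_1}\big(\tfrac{h_1}{h_2\varpi}\partial_{q_1}\big)+\partial_{q_2}\big(\tfrac{h_2}{h_1\varpi}\partial_{q_2}\big)\big]$; in tangent sphere coordinates this is the displayed formula. $I_1,K_1$ are the modified Bessel functions of order one of the first and second kind. Note $R=\sqrt{\mu^2+\nu^2}$ equals the reciprocal of the Euclidean distance $\sqrt{x^2+y^2+z^2}$. *)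

(* Defs.v *)
From Stdlib Require Import Reals.
From Coquelicot Require Import Coquelicot.
Open Scope R_scope.

Definition E2 (psi : R -> R -> R) (mu nu : R) : R :=
  (mu ^ 2 + nu ^ 2) ^ 2 *
  ( Derive (fun m => Derive (fun m' => psi m' nu) m) mu
  + (mu ^ 2 - nu ^ 2) / (mu * (mu ^ 2 + nu ^ 2)) * Derive (fun m => psi m nu) mu
  + 2 * nu / (mu ^ 2 + nu ^ 2) * Derive (fun v => psi mu v) nu
  + Derive (fun v => Derive (fun v' => psi mu v') v) nu ).

Definition sepR (M N : R -> R) (mu nu : R) : R :=
  / sqrt (mu ^ 2 + nu ^ 2) * M mu * N nu.

Definition I1 (x : R) : R :=
  Series (fun k => (x / 2) ^ (2 * k + 1) / (INR (Factorial.fact k) * INR (Factorial.fact (k + 1)))).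

(* Modified Bessel function of the second kind, order 1 (x > 0):
   K_1(x) = int_0^oo exp(-x cosh t) cosh t dt  (DLMF 10.32.9). *)
Definition K1 (x : R) : R :=
  RInt_gen (fun t => exp (- x * cosh t) * cosh t) (at_point 0) (Rbar_locally p_infty).

Definition twice_diff_pos (M : R -> R) : Prop :=
  forall mu, 0 < mu -> ex_derive M mu /\ ex_derive (Derive M) mu.

Definition twice_diff (N : R -> R) : Prop :=
  forall nu, ex_derive N nu /\ ex_derive (Derive N) nu.

(* Main.v *)
Require Import Defs.
From Stdlib Require Import Reals Lra Psatz FunctionalExtensionality.
From Coquelicot Require Import Coquelicot.
Open Scope R_scope.

Lemma is_derive_eq (f : R -> R) x l l' : is_derive f x l' -> l' = l -> is_derive f x l.
Proof. intros H ->; exact H. Qed.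

Ltac req := match goal with |- @eq _ ?a ?b => change (@eq R a b) end.

Definition sol (D : R -> Prop) (p q : R -> R) (y : R -> R) :=
  forall x, D x -> ex_derive y x /\ ex_derive (Derive y) x /\
                   Derive (Derive y) x = p x * Derive y x + q x * y x.

Definition Wr (a b : R -> R) x := a x * Derive b x - Derive a x * b x.

Definition constD (D : R -> Prop) :=
  forall g : R -> R, (forall x, D x -> is_derive g x 0) -> forall x y, D x -> D y -> g x = g y.

Lemma constD_pos : constD (fun x => 0 < x).
Proof.
  intros g Hg x y Hx Hy.
  assert (H: forall a b, 0 < a -> a < b -> g a = g b).
  { intros a b Ha Hab. apply (eq_is_derive g a b); [|exact Hab].
    intros t Ht. apply Hg. lra. }
  destruct (Rtotal_order x y) as [Hl|[He|Hl]].
  - now apply H.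
  - now subst.
  - symmetry; now apply H.
Qed.

Lemma constD_all : constD (fun _ => True).
Proof.
  intros g Hg x y _ _.
  assert (H: forall a b, a < b -> g a = g b).
  { intros a b Hab. apply (eq_is_derive g a b); [|exact Hab].
    intros t Ht. apply Hg. exact I. }
  destruct (Rtotal_order x y) as [Hl|[He|Hl]].
  - now apply H.
  - now subst.
  - symmetry; now apply H.
Qed.

Lemma Wr_derive D p q a b x : sol D p q a -> sol D p q b -> D x ->
  is_derive (Wr a b) x (p x * Wr a b x).
Proof.
  intros Ha Hb Hx. destruct (Ha x Hx) as [a1 [a2 a3]]. destruct (Hb x Hx) as [b1 [b2 b3]].
  unfold Wr.
  eapply is_derive_eq.
  - apply (is_derive_minus (fun t => a t * Derive b t) (fun t => Derive a t * b t)).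
    + apply (is_derive_mult a (Derive b)); [apply Derive_correct; auto|apply Derive_correct; auto|].
      intros; apply Rmult_comm.
    + apply (is_derive_mult (Derive a) b); [apply Derive_correct; auto|apply Derive_correct; auto|].
      intros; apply Rmult_comm.
  - simpl. unfold minus, plus, opp, mult; simpl. unfold mult; simpl. rewrite a3, b3. ring.
Qed.

Lemma Wr_const D p q (rho : R -> R) a b x0 : constD D -> D x0 ->
  (forall x, D x -> is_derive rho x (p x * rho x) /\ rho x <> 0) ->
  sol D p q a -> sol D p q b ->
  forall x, D x -> Wr a b x = (Wr a b x0 / rho x0) * rho x.
Proof.
  intros Hc Hx0 Hr Ha Hb x Hx.
  assert (E: Wr a b x / rho x = Wr a b x0 / rho x0).
  { apply (Hc (fun t => Wr a b t / rho t)); auto.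
    intros t Ht. destruct (Hr t Ht) as [r1 r2].
    eapply is_derive_eq. apply is_derive_div. apply (Wr_derive D p q); auto. exact r1. exact r2.
    req. field. auto. }
  rewrite <- E. field; apply Hr; auto.
Qed.

Lemma sol_unique D p q (rho : R -> R) x0 (y1 y2 u : R -> R) : constD D -> D x0 ->
  (forall x, D x -> is_derive rho x (p x * rho x) /\ rho x <> 0) ->
  sol D p q y1 -> sol D p q y2 -> sol D p q u -> Wr y1 y2 x0 <> 0 ->
  exists c1 c2, forall x, D x -> u x = c1 * y1 x + c2 * y2 x.
Proof.
  intros Hc Hx0 Hr H1 H2 Hu HW.
  set (k0 := Wr y1 y2 x0 / rho x0). set (k1 := Wr u y1 x0 / rho x0).
  set (k2 := Wr u y2 x0 / rho x0).
  assert (Hk0 : k0 <> 0). { unfold k0. intro E. apply HW.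
    assert (rho x0 <> 0) by (apply Hr; auto).
    unfold Rdiv in E. apply Rmult_integral in E. destruct E as [E|E]; auto. apply Rinv_neq_0_compat in H. contradiction. }
  exists (k2 / k0), (- (k1 / k0)). intros x Hx.
  pose proof (Wr_const D p q rho y1 y2 x0 Hc Hx0 Hr H1 H2 x Hx) as E0.
  pose proof (Wr_const D p q rho u y1 x0 Hc Hx0 Hr Hu H1 x Hx) as E1.
  pose proof (Wr_const D p q rho u y2 x0 Hc Hx0 Hr Hu H2 x Hx) as E2.
  fold k0 in E0. fold k1 in E1. fold k2 in E2.
  assert (Hrx : rho x <> 0) by (apply Hr; auto).
  assert (Id : u x * Wr y1 y2 x = y1 x * Wr u y2 x - y2 x * Wr u y1 x) by (unfold Wr; ring).
  rewrite E0, E1, E2 in Id.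
  apply (Rmult_eq_reg_r (k0 * rho x)). 2: now apply Rmult_integral_contrapositive.
  rewrite Id. field. auto.
Qed.

Lemma sol_comb D p q y1 y2 c1 c2 u : (forall x, D x -> locally x D) ->
  sol D p q y1 -> sol D p q y2 -> (forall x, D x -> u x = c1 * y1 x + c2 * y2 x) ->
  sol D p q u /\ (forall x, D x -> Derive u x = c1 * Derive y1 x + c2 * Derive y2 x).
Proof.
  intros Ho H1 H2 Hu.
  assert (Loc : forall x, D x -> locally x (fun t => c1 * y1 t + c2 * y2 t = u t)).
  { intros x Hx. apply (filter_imp D); [|now apply Ho]. intros t Ht; now rewrite Hu. }
  assert (Dd : forall x, D x -> Derive u x = c1 * Derive y1 x + c2 * Derive y2 x).
  { intros x Hx. destruct (H1 x Hx) as [a1 _]. destruct (H2 x Hx) as [b1 _].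
    rewrite <- (Derive_ext_loc _ _ x (Loc x Hx)).
    rewrite Derive_plus; [|apply ex_derive_scal; auto|apply ex_derive_scal; auto].
    now rewrite !Derive_scal. }
  split; [|exact Dd].
  intros x Hx. destruct (H1 x Hx) as [a1 [a2 a3]]. destruct (H2 x Hx) as [b1 [b2 b3]].
  assert (Loc2 : locally x (fun t => c1 * Derive y1 t + c2 * Derive y2 t = Derive u t)).
  { apply (filter_imp D); [|now apply Ho]. intros t Ht; now rewrite Dd. }
  split; [|split].
  - apply (ex_derive_ext_loc _ _ x (Loc x Hx)).
    apply (ex_derive_plus (fun t => c1 * y1 t) (fun t => c2 * y2 t)); apply ex_derive_scal; auto.
  - apply (ex_derive_ext_loc _ _ x Loc2).
    apply (ex_derive_plus (fun t => c1 * Derive y1 t) (fun t => c2 * Derive y2 t)); apply ex_derive_scal; auto.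
  - rewrite <- (Derive_ext_loc _ _ x Loc2).
    rewrite Derive_plus; [|apply ex_derive_scal; auto|apply ex_derive_scal; auto].
    rewrite !Derive_scal, a3, b3, Dd, Hu; auto. ring.
Qed.


Ltac etaD := repeat match goal with |- context [Derive (fun x => ?f x)] => change (Derive (fun x => f x)) with (Derive f) end.

Lemma sqr_pos m v : 0 < m -> 0 < m^2 + v^2.
Proof. intros; nra. Qed.

Lemma dm1 (M N : R -> R) v m : twice_diff_pos M -> 0 < m ->
  Derive (fun m' => sepR M N m' v) m =
  N v * (Derive M m * / sqrt (m^2+v^2) - M m * m * / sqrt (m^2+v^2) / (m^2+v^2)).
Proof.
  intros HM Hm. destruct (HM m Hm) as [d1 d2]. pose proof (sqr_pos m v Hm) as Hp.
  apply is_derive_unique. unfold sepR. auto_derive.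
  - replace (m * (m * 1) + v * (v * 1)) with (m^2+v^2) by ring.
    repeat split; auto. apply Rgt_not_eq, sqrt_lt_R0; auto.
  - replace (m * (m * 1) + v * (v * 1)) with (m^2+v^2) by ring.
    assert (Hs := sqrt_sqrt (m^2+v^2) (Rlt_le _ _ Hp)).
    assert (Hs0 := sqrt_lt_R0 _ Hp).
    set (r := sqrt (m^2+v^2)) in *. clearbody r. rewrite <- Hs. req. etaD. field. lra.
Qed.

Lemma dm2 (M N : R -> R) v m : twice_diff_pos M -> 0 < m ->
  Derive (fun m0 => Derive (fun m' => sepR M N m' v) m0) m =
  N v * (Derive (Derive M) m * / sqrt (m^2+v^2)
         - 2 * Derive M m * m * / sqrt (m^2+v^2) / (m^2+v^2)
         - M m * / sqrt (m^2+v^2) / (m^2+v^2)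
         + 3 * M m * m^2 * / sqrt (m^2+v^2) / (m^2+v^2)^2).
Proof.
  intros HM Hm.
  rewrite (Derive_ext_loc _ (fun m0 => N v * (Derive M m0 * / sqrt (m0^2+v^2) - M m0 * m0 * / sqrt (m0^2+v^2) / (m0^2+v^2)))).
  2:{ apply (locally_open (fun t => 0 < t)); [apply open_gt| |exact Hm].
      intros t Ht. apply dm1; auto. }
  destruct (HM m Hm) as [d1 d2]. pose proof (sqr_pos m v Hm) as Hp.
  apply is_derive_unique. auto_derive.
  - replace (m * (m * 1) + v * (v * 1)) with (m^2+v^2) by ring.
    repeat split; auto; try apply Rgt_not_eq, sqrt_lt_R0; auto; lra.
  - replace (m * (m * 1) + v * (v * 1)) with (m^2+v^2) by ring.
    assert (Hs := sqrt_sqrt (m^2+v^2) (Rlt_le _ _ Hp)).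
    assert (Hs0 := sqrt_lt_R0 _ Hp).
    set (r := sqrt (m^2+v^2)) in *. clearbody r. rewrite <- Hs. req. etaD. field. lra.
Qed.

Lemma dv1 (M N : R -> R) mu v : twice_diff N -> 0 < mu ->
  Derive (fun v' => sepR M N mu v') v =
  M mu * (Derive N v * / sqrt (mu^2+v^2) - N v * v * / sqrt (mu^2+v^2) / (mu^2+v^2)).
Proof.
  intros HN Hm. destruct (HN v) as [d1 d2]. pose proof (sqr_pos mu v Hm) as Hp.
  apply is_derive_unique. unfold sepR. auto_derive.
  - replace (mu * (mu * 1) + v * (v * 1)) with (mu^2+v^2) by ring.
    repeat split; auto. apply Rgt_not_eq, sqrt_lt_R0; auto.
  - replace (mu * (mu * 1) + v * (v * 1)) with (mu^2+v^2) by ring.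
    assert (Hs := sqrt_sqrt (mu^2+v^2) (Rlt_le _ _ Hp)).
    assert (Hs0 := sqrt_lt_R0 _ Hp).
    set (r := sqrt (mu^2+v^2)) in *. clearbody r. rewrite <- Hs. req. etaD. field. lra.
Qed.

Lemma dv2 (M N : R -> R) mu v : twice_diff N -> 0 < mu ->
  Derive (fun v0 => Derive (fun v' => sepR M N mu v') v0) v =
  M mu * (Derive (Derive N) v * / sqrt (mu^2+v^2)
         - 2 * Derive N v * v * / sqrt (mu^2+v^2) / (mu^2+v^2)
         - N v * / sqrt (mu^2+v^2) / (mu^2+v^2)
         + 3 * N v * v^2 * / sqrt (mu^2+v^2) / (mu^2+v^2)^2).
Proof.
  intros HN Hm.
  rewrite (Derive_ext (fun v0 => Derive (fun v' => sepR M N mu v') v0)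
     (fun v0 => M mu * (Derive N v0 * / sqrt (mu^2+v0^2) - N v0 * v0 * / sqrt (mu^2+v0^2) / (mu^2+v0^2)))).
  2:{ intros t. apply dv1; auto. }
  destruct (HN v) as [d1 d2]. pose proof (sqr_pos mu v Hm) as Hp.
  apply is_derive_unique. auto_derive.
  - replace (mu * (mu * 1) + v * (v * 1)) with (mu^2+v^2) by ring.
    repeat split; auto; try apply Rgt_not_eq, sqrt_lt_R0; auto; lra.
  - replace (mu * (mu * 1) + v * (v * 1)) with (mu^2+v^2) by ring.
    assert (Hs := sqrt_sqrt (mu^2+v^2) (Rlt_le _ _ Hp)).
    assert (Hs0 := sqrt_lt_R0 _ Hp).
    set (r := sqrt (mu^2+v^2)) in *. clearbody r. rewrite <- Hs. req. etaD. field. lra.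
Qed.

Lemma E2_sep (M N : R -> R) mu nu : twice_diff_pos M -> twice_diff N -> 0 < mu ->
  E2 (sepR M N) mu nu = (mu^2+nu^2)^2 * / sqrt (mu^2+nu^2) *
    (Derive (Derive M) mu * N nu - / mu * Derive M mu * N nu + M mu * Derive (Derive N) nu).
Proof.
  intros HM HN Hm. unfold E2.
  rewrite (dm2 M N nu mu HM Hm), (dm1 M N nu mu HM Hm), (dv1 M N mu nu HN Hm), (dv2 M N mu nu HN Hm).
  pose proof (sqr_pos mu nu Hm) as Hp.
  assert (Hs := sqrt_sqrt (mu^2+nu^2) (Rlt_le _ _ Hp)).
  assert (Hs0 := sqrt_lt_R0 _ Hp).
  set (r := sqrt (mu^2+nu^2)) in *. clearbody r. req. etaD. field. lra.
Qed.



Ltac rnorm := simpl; unfold plus, mult, scal, one, opp, minus, zero; simpl; unfold mult, one, plus, zero, opp; simpl; ring.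

Lemma Dcos n : forall v, Derive (fun v => cos (n * v)) v = - n * sin (n * v).
Proof. intros v. apply is_derive_unique. auto_derive; auto. ring. Qed.
Lemma Dsin n : forall v, Derive (fun v => sin (n * v)) v = n * cos (n * v).
Proof. intros v. apply is_derive_unique. auto_derive; auto. ring. Qed.

Lemma sol_cos n : sol (fun _ => True) (fun _ => 0) (fun _ => - n^2) (fun v => cos (n * v)).
Proof.
  intros x _. assert (E: Derive (fun v => cos (n * v)) = fun v => - n * sin (n * v)).
  { apply functional_extensionality; intro; apply Dcos. }
  rewrite E. split; [|split].
  - auto_derive; auto.
  - auto_derive; auto.
  - apply is_derive_unique. auto_derive; auto. ring.
Qed.

Lemma sol_sin n : sol (fun _ => True) (fun _ => 0) (fun _ => - n^2) (fun v => sin (n * v)).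
Proof.
  intros x _. assert (E: Derive (fun v => sin (n * v)) = fun v => n * cos (n * v)).
  { apply functional_extensionality; intro; apply Dsin. }
  rewrite E. split; [|split].
  - auto_derive; auto.
  - auto_derive; auto.
  - apply is_derive_unique. auto_derive; auto. ring.
Qed.

Lemma bessel_y (f f1 f2 : R -> R) n : 0 < n ->
  (forall x, 0 < x -> is_derive f x (f1 x)) ->
  (forall x, 0 < x -> is_derive f1 x (f2 x)) ->
  (forall x, 0 < x -> x^2 * f2 x + x * f1 x - (x^2+1) * f x = 0) ->
  sol (fun x => 0 < x) (fun x => / x) (fun _ => n^2) (fun m => m * f (n * m)) /\
  (forall m, 0 < m -> Derive (fun m => m * f (n * m)) m = f (n * m) + n * m * f1 (n * m)).
Proof.
  intros Hn H0 H1 Hode.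
  assert (D1 : forall m, 0 < m -> is_derive (fun m => m * f (n * m)) m (f (n * m) + n * m * f1 (n * m))).
  { intros m Hm. eapply is_derive_eq.
    - apply (is_derive_mult (fun m => m) (fun m => f (n * m))).
      + apply is_derive_id.
      + apply (is_derive_comp f (fun m => n * m)). apply H0. nra.
        eapply is_derive_eq. apply is_derive_scal, is_derive_id. simpl. reflexivity.
      + intros; apply Rmult_comm.
    - simpl. unfold plus, mult, one, scal; simpl. unfold mult; simpl. unfold one; simpl. ring. }
  assert (DD : forall m, 0 < m -> Derive (fun m => m * f (n * m)) m = f (n * m) + n * m * f1 (n * m)).
  { intros; apply is_derive_unique; auto. }
  split; [|exact DD].
  intros m Hm.
  assert (Loc : locally m (fun t => f (n * t) + n * t * f1 (n * t) = Derive (fun m => m * f (n * m)) t)).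
  { apply (locally_open (fun t => 0 < t)); [apply open_gt| |exact Hm]. intros t Ht. now rewrite DD. }
  assert (D2 : is_derive (fun t => f (n * t) + n * t * f1 (n * t)) m
                 (n * f1 (n * m) + n * f1 (n * m) + n * m * (n * f2 (n * m)))).
  { assert (Hnm : 0 < n * m) by nra.
    assert (Hc : forall g dg, is_derive g (n * m) dg -> is_derive (fun t => g (n * t)) m (n * dg)).
    { intros g dg Hg. eapply is_derive_eq. apply (is_derive_comp g (fun t => n * t)). exact Hg.
      eapply is_derive_eq. apply is_derive_scal, is_derive_id. reflexivity. rnorm. }
    eapply is_derive_eq.
    - apply (is_derive_plus (fun t => f (n * t)) (fun t => n * t * f1 (n * t))).
      + apply Hc. apply H0; auto.
      + apply (is_derive_mult (fun t => n * t) (fun t => f1 (n * t))).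
        * eapply is_derive_eq. apply is_derive_scal, is_derive_id. reflexivity.
        * apply Hc. apply H1; auto.
        * intros; apply Rmult_comm.
    - simpl. unfold plus, mult, one; simpl. unfold mult; simpl. unfold one; simpl. ring. }
  split; [|split].
  - exists (f (n * m) + n * m * f1 (n * m)); auto.
  - eapply ex_derive_ext_loc. exact Loc. eexists; exact D2.
  - rewrite <- (Derive_ext_loc _ _ m Loc). transitivity (n * f1 (n * m) + n * f1 (n * m) + n * m * (n * f2 (n * m))). apply is_derive_unique; exact D2.
    rewrite DD; auto.
    assert (Hnm : 0 < n * m) by nra. pose proof (Hode _ Hnm) as O.
    assert (E : f2 (n*m) = (((n*m)^2+1)*f(n*m) - n*m*f1(n*m)) / (n*m)^2).
    { assert ((n*m)^2 <> 0) by (apply pow_nonzero; lra).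
      apply (Rmult_eq_reg_l ((n*m)^2)); auto. field_simplify; [lra|split; lra]. }
    rewrite E. field. lra.
Qed.


Lemma exp_le_m x y : x <= y -> exp x <= exp y.
Proof. intro H. destruct (Rle_lt_or_eq_dec _ _ H) as [H'|H']. apply Rlt_le, exp_increasing; auto. subst; lra. Qed.

Lemma exp_mul_n (m : nat) y : exp (INR m * y) = exp y ^ m.
Proof.
  induction m. simpl. rewrite Rmult_0_l, exp_0. reflexivity.
  rewrite S_INR, Rmult_plus_distr_r, Rmult_1_l, exp_plus, IHm. simpl. ring.
Qed.

Lemma cosh_ge1 t : 1 <= cosh t.
Proof.
  unfold cosh. pose proof (exp_pos t). rewrite exp_Ropp. set (e := exp t) in *.
  assert (He: e * /e = 1) by (field; lra).
  assert (0 <= (e - 1)^2 * /e) by (apply Rmult_le_pos; [apply pow2_ge_0|apply Rlt_le, Rinv_0_lt_compat; lra]).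
  replace ((e - 1)^2 * /e) with (e - 2 + /e) in H0 by (field; lra). lra.
Qed.

Lemma exp_le_2cosh t : exp t <= 2 * cosh t.
Proof. unfold cosh. pose proof (exp_pos (-t)). lra. Qed.

Lemma pow_le_exp (m : nat) y : (0 < m)%nat -> 0 <= y -> y^m <= INR m ^ m * exp y.
Proof.
  intros Hm Hy. assert (HM : 0 < INR m) by (apply lt_0_INR; auto).
  assert (E: exp y = exp (y / INR m) ^ m).
  { rewrite <- exp_mul_n. f_equal. field. lra. }
  assert (H1: y / INR m <= exp (y / INR m)).
  { pose proof (exp_ineq1_le (y / INR m)). lra. }
  assert (H2: (y / INR m)^m <= exp (y / INR m) ^ m).
  { apply pow_incr. split; auto. apply Rmult_le_pos; auto. apply Rlt_le, Rinv_0_lt_compat; auto. }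
  rewrite E. replace (y^m) with (INR m ^ m * (y / INR m)^m).
  apply Rmult_le_compat_l; auto. apply pow_le; lra.
  rewrite <- Rpow_mult_distr. f_equal. field. lra.
Qed.

Definition gk (k : nat) (a t : R) := exp (- a * cosh t) * cosh t ^ k.

Lemma gk_nonneg k a t : 0 <= gk k a t.
Proof. unfold gk. apply Rmult_le_pos. apply Rlt_le, exp_pos. apply pow_le. pose proof (cosh_ge1 t); lra. Qed.

Lemma gk_bound k a t : 0 < a -> gk k a t <= 2 * (INR (S k) / a)^(S k) * exp (- t).
Proof.
  intros Ha. unfold gk. set (c := cosh t). pose proof (cosh_ge1 t) as Hc. fold c in Hc.
  pose proof (exp_le_2cosh t) as He. fold c in He.
  pose proof (pow_le_exp (S k) (a * c) ltac:(lia) ltac:(nra)) as Hp.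
  rewrite Rpow_mult_distr in Hp.
  assert (Hak : 0 < a ^ S k) by (apply pow_lt; auto).
  assert (Hc' : c ^ S k <= (INR (S k) / a) ^ S k * exp (a * c)).
  { unfold Rdiv. rewrite Rpow_mult_distr, pow_inv.
    apply (Rmult_le_reg_l (a ^ S k)); auto. field_simplify; [|lra]. lra. }
  rewrite exp_Ropp. pose proof (exp_pos t). pose proof (exp_pos (a * c)).
  replace (- a * c) with (- (a * c)) by ring. rewrite exp_Ropp.
  apply (Rmult_le_reg_l (exp t * exp (a * c))); [nra|].
  field_simplify; [|lra|lra].
  simpl pow in *.
  assert (0 <= c ^ k) by (apply pow_le; lra).
  set (B := (INR (S k) / a) ^ S k) in *.
  nra.
Qed.

Lemma RInt_exp_bound K b : 0 <= K -> 0 <= b -> RInt (fun t => K * exp (- t)) 0 b <= K.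
Proof.
  intros HK Hb.
  assert (H := is_RInt_derive (fun t => - K * exp (- t)) (fun t => K * exp (- t)) 0 b).
  assert (H1 : forall x : R, Rmin 0 b <= x <= Rmax 0 b ->
     is_derive (fun t : R => - K * exp (- t)) x ((fun t : R => K * exp (- t)) x)).
  { intros x _. auto_derive; auto. ring. }
  assert (H2 : forall x : R, Rmin 0 b <= x <= Rmax 0 b -> continuous (fun t : R => K * exp (- t)) x).
  { intros x _. apply (ex_derive_continuous (fun t => K * exp (- t))). auto_derive; auto. }
  rewrite (is_RInt_unique _ 0 b _ (H H1 H2)).
  simpl. unfold minus, plus, opp; simpl. rewrite Ropp_0, exp_0. pose proof (exp_pos (-b)). nra.
Qed.

Lemma gen_exist (f : R -> R) K : (forall t, continuous f t) ->
  (forall t, 0 <= t -> 0 <= f t <= K * exp (- t)) ->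
  exists l, is_RInt_gen f (at_point 0) (Rbar_locally p_infty) l /\
            (forall b, 0 <= b -> RInt f 0 b <= l).
Proof.
  intros Hc Hb.
  assert (Hex : forall a b, ex_RInt f a b) by (intros; apply (ex_RInt_continuous (V := R_CompleteNormedModule)); intros; apply Hc).
  assert (HK : 0 <= K).
  { destruct (Hb 0 (Rle_refl 0)) as [h1 h2]. rewrite Ropp_0, exp_0 in h2. lra. }
  assert (Hup : forall b, 0 <= b -> RInt f 0 b <= K).
  { intros b Hb0. eapply Rle_trans; [|apply (RInt_exp_bound K b HK Hb0)].
    apply RInt_le; auto. apply (ex_RInt_continuous (V := R_CompleteNormedModule)). intros z _.
    apply (ex_derive_continuous (fun t => K * exp (- t))). auto_derive; auto.
    intros x Hx. apply Hb. lra. }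
  assert (Hmono : forall b0 b, 0 <= b0 <= b -> RInt f 0 b0 <= RInt f 0 b).
  { intros b0 b Hbb. rewrite <- (RInt_Chasles f 0 b0 b); auto.
    assert (0 <= RInt f b0 b). { apply RInt_ge_0; auto. lra. intros x Hx. apply Hb. lra. }
    simpl. unfold plus; simpl. lra. }
  set (E := fun y => exists b, 0 <= b /\ y = RInt f 0 b).
  assert (HE1 : bound E). { exists K. intros y [b [Hb0 ->]]. now apply Hup. }
  assert (HE2 : exists y, E y). { exists (RInt f 0 0). exists 0. split; [lra|reflexivity]. }
  destruct (completeness E HE1 HE2) as [m [Hm1 Hm2]].
  exists m. split.
  - apply (filterlimi_lim_ext_loc (fun ab => RInt f (fst ab) (snd ab))).
    + apply Filter_prod with (fun _ => True) (fun _ => True); try apply filter_true.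
      intros; simpl. apply (RInt_correct (V := R_CompleteNormedModule)); auto.
    + apply filterlim_locally. intros eps.
      assert (Hb0 : exists b0, 0 <= b0 /\ m - eps < RInt f 0 b0).
      { destruct (Classical_Prop.classic (exists b0, 0 <= b0 /\ m - eps < RInt f 0 b0)) as [H|H]; auto.
        exfalso. assert (m <= m - eps).
        { apply Hm2. intros y [b [Hb' ->]]. apply Rnot_lt_le. intro Hl. apply H. exists b; auto. }
        pose proof (cond_pos eps). lra. }
      destruct Hb0 as [b0 [Hb0 Hlt]].
      apply Filter_prod with (fun a => a = 0) (fun b => b0 < b).
      * reflexivity.
      * exists b0; auto.
      * intros a b Ha Hb'. subst a. simpl.
        assert (RInt f 0 b <= m) by (apply Hm1; exists b; split; [lra|reflexivity]).
        assert (RInt f 0 b0 <= RInt f 0 b) by (apply Hmono; lra).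
        unfold ball; simpl. unfold AbsRing_ball, abs, minus, plus, opp; simpl.
        apply Rabs_def1; lra.
  - intros b Hb0. apply Hm1. exists b; auto.
Qed.

Definition Fk (k : nat) (x : R) := RInt_gen (gk k x) (at_point 0) (Rbar_locally p_infty).

Lemma gk_cont k a t : continuous (gk k a) t.
Proof.
  apply (ex_derive_continuous (gk k a)). unfold gk, cosh. auto_derive. auto.
Qed.

Lemma Fk_spec k a : 0 < a ->
  is_RInt_gen (gk k a) (at_point 0) (Rbar_locally p_infty) (Fk k a) /\
  (forall b, 0 <= b -> RInt (gk k a) 0 b <= Fk k a).
Proof.
  intros Ha.
  destruct (gen_exist (gk k a) (2 * (INR (S k) / a)^(S k))) as [l [Hl1 Hl2]].
  - apply gk_cont.
  - intros t _. split. apply gk_nonneg. apply gk_bound; auto.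
  - assert (E : Fk k a = l) by (unfold Fk; apply is_RInt_gen_unique; auto).
    rewrite E. auto.
Qed.

Lemma Fk_nonneg k a : 0 < a -> 0 <= Fk k a.
Proof.
  intros Ha. destruct (Fk_spec k a Ha) as [_ H]. eapply Rle_trans; [|apply (H 0); lra].
  rewrite RInt_point. apply Rle_refl.
Qed.

Lemma Fk_pos k a : 0 < a -> 0 < Fk k a.
Proof.
  intros Ha. destruct (Fk_spec k a Ha) as [_ H]. eapply Rlt_le_trans; [|apply (H 1); lra].
  apply RInt_gt_0. lra.
  intros x _. unfold gk. apply Rmult_lt_0_compat. apply exp_pos. apply pow_lt. pose proof (cosh_ge1 x); lra.
  intros; apply gk_cont.
Qed.

Lemma expq y : 0 <= exp y - 1 - y <= y^2 * exp (Rabs y).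
Proof.
  pose proof (exp_ineq1_le y) as H1. pose proof (exp_ineq1_le (-y)) as H2.
  assert (EF : exp y * exp (- y) = 1) by (rewrite <- exp_plus; replace (y + - y) with 0 by ring; apply exp_0).
  pose proof (exp_pos y). pose proof (exp_pos (-y)).
  assert (A : exp y - 1 - y <= y * (exp y - 1)).
  { assert (exp y * (1 - y) <= exp y * exp (- y)) by (apply Rmult_le_compat_l; lra). nra. }
  split; [lra|].
  destruct (Rle_or_lt 0 y) as [Hy|Hy].
  - rewrite Rabs_pos_eq; auto.
    assert (exp y * (1 - y) <= exp y * exp (- y)) by (apply Rmult_le_compat_l; lra).
    assert (exp y - 1 <= y * exp y) by nra. nra.
  - rewrite Rabs_left; auto. pose proof (exp_ineq1_le (-y)).
    assert (1 <= exp (- y)) by lra.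
    assert (y * (exp y - 1) <= y^2) by nra.
    assert (0 <= y^2) by nra. nra.
Qed.

Lemma gk_diff_bound k x h t : 0 < x -> Rabs h <= x/2 ->
  Rabs (gk k (x+h) t - gk k x t + h * gk (S k) x t) <= h^2 * gk (S (S k)) (x/2) t.
Proof.
  intros Hx Hh. unfold gk. set (c := cosh t). assert (Hc : 1 <= c) by apply cosh_ge1.
  assert (Ek : exp (- (x + h) * c) = exp (- x * c) * exp (- h * c)).
  { rewrite <- exp_plus. f_equal. ring. }
  rewrite Ek.
  replace (exp (- x * c) * exp (- h * c) * c ^ k - exp (- x * c) * c ^ k + h * (exp (- x * c) * c ^ S k))
    with ((exp (- x * c) * c ^ k) * (exp (- h * c) - 1 - (- h * c))) by (simpl; ring).
  set (A := exp (- x * c) * c ^ k).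
  assert (HA : 0 <= A) by (unfold A; apply Rmult_le_pos; [apply Rlt_le, exp_pos|apply pow_le; lra]).
  destruct (expq (- h * c)) as [q1 q2].
  rewrite Rabs_pos_eq by (apply Rmult_le_pos; auto).
  assert (Hab : Rabs (- h * c) = Rabs h * c).
  { rewrite Rabs_mult, (Rabs_pos_eq c) by lra. rewrite Rabs_Ropp. reflexivity. }
  rewrite Hab in q2.
  assert (Hexp : exp (- x * c) * exp (Rabs h * c) <= exp (- (x/2) * c)).
  { rewrite <- exp_plus. apply exp_le_m. nra. }
  eapply Rle_trans. apply Rmult_le_compat_l; [exact HA|exact q2].
  unfold A. change (c ^ S (S k)) with (c * (c * c ^ k)).
  assert (0 <= c ^ k) by (apply pow_le; lra).
  assert (0 <= exp (Rabs h * c)) by (apply Rlt_le, exp_pos).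
  replace (exp (- x * c) * c ^ k * ((- h * c) ^ 2 * exp (Rabs h * c)))
    with (h^2 * (c * (c * c ^ k)) * (exp (- x * c) * exp (Rabs h * c))) by ring.
  replace (h ^ 2 * (exp (- (x / 2) * c) * (c * (c * c ^ k))))
    with (h^2 * (c * (c * c ^ k)) * exp (- (x / 2) * c)) by ring.
  apply Rmult_le_compat_l; auto.
  apply Rmult_le_pos; [nra|]. apply Rmult_le_pos; [lra|]. apply Rmult_le_pos; lra.
Qed.

Lemma Fk_derive k x : 0 < x -> is_derive (Fk k) x (- Fk (S k) x).
Proof.
  intros Hx. apply is_derive_Reals. intros eps Heps.
  set (C := Fk (S (S k)) (x/2)). assert (HC: 0 <= C) by (apply Fk_nonneg; lra).
  assert (Hd : 0 < Rmin (x/2) (eps/(C+1))) by (apply Rmin_pos; [lra| apply Rdiv_lt_0_compat; lra]).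
  exists (mkposreal _ Hd). intros h Hh0 Hh. simpl in Hh.
  assert (Hh1 : Rabs h <= x/2) by (pose proof (Rmin_l (x/2) (eps/(C+1))); lra).
  assert (Hh2 : Rabs h < eps/(C+1)) by (pose proof (Rmin_r (x/2) (eps/(C+1))); lra).
  assert (Hxh : 0 < x + h) by (pose proof (Rle_abs (-h)); rewrite Rabs_Ropp in *; lra).
  destruct (Fk_spec k (x+h) Hxh) as [I1 _].
  destruct (Fk_spec k x Hx) as [I0 _].
  destruct (Fk_spec (S k) x Hx) as [I2 _].
  destruct (Fk_spec (S (S k)) (x/2) ltac:(lra)) as [I3 _].
  pose proof (is_RInt_gen_plus _ _ _ _ (is_RInt_gen_minus _ _ _ _ I1 I0) (is_RInt_gen_scal _ h _ I2)) as Hdf.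
  pose proof (is_RInt_gen_scal _ (h^2) _ I3) as Hg.
  assert (F1 : filter_prod (at_point 0) (Rbar_locally p_infty) (fun ab : R*R => fst ab <= snd ab)).
  { apply Filter_prod with (fun a => a = 0) (fun b => 0 < b). reflexivity. exists 0; auto.
    intros a b Ha Hb; simpl; subst; lra. }
  assert (F2 : filter_prod (at_point 0) (Rbar_locally p_infty) (fun ab : R*R => forall t,
     fst ab <= t <= snd ab -> norm (plus (minus (gk k (x+h) t) (gk k x t)) (scal h (gk (S k) x t)))
       <= scal (h^2) (gk (S (S k)) (x/2) t))).
  { apply Filter_prod with (fun _ => True) (fun _ => True); try apply filter_true.
    intros a b _ _ t _. apply (gk_diff_bound k x h t Hx Hh1). }
  pose proof (RInt_gen_norm _ _ _ _ F1 F2 Hdf Hg) as N.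
  change (Rabs (Fk k (x + h) - Fk k x + h * Fk (S k) x) <= h^2 * C) in N.
  replace ((Fk k (x + h) - Fk k x) / h - - Fk (S k) x)
    with ((Fk k (x + h) - Fk k x + h * Fk (S k) x) / h) by (field; auto).
  rewrite Rabs_div; auto.
  assert (Hah : 0 < Rabs h) by (apply Rabs_pos_lt; auto).
  apply (Rle_lt_trans _ (Rabs h * C)).
  - apply (Rmult_le_reg_r (Rabs h)); auto. unfold Rdiv. rewrite Rmult_assoc, Rinv_l by lra.
    rewrite <- pow2_abs in N. lra.
  - apply (Rle_lt_trans _ (eps / (C+1) * C)). apply Rmult_le_compat_r; lra.
    apply (Rmult_lt_reg_r (C+1)); [lra|]. field_simplify; [nra|lra].
Qed.

Definition Gf (x t : R) := - exp (- x * cosh t) * (x * sinh t * cosh t + sinh t).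
Definition Hf (x t : R) := x^2 * gk 3 x t - x * gk 2 x t - (x^2 + 1) * gk 1 x t.

Lemma Gf_derive x t : is_derive (Gf x) t (Hf x t).
Proof.
  unfold Gf, Hf, gk, cosh, sinh. auto_derive; auto.
  rewrite exp_Ropp. pose proof (exp_pos t). unfold Rdiv. set (E := exp t) in *.
  set (Z := exp (- x * ((E + / E) * / 2))). clearbody Z E. req. field. lra.
Qed.

Lemma Hf_cont x t : continuous (Hf x) t.
Proof. apply (ex_derive_continuous (Hf x)). unfold Hf, gk, cosh. auto_derive. auto. Qed.

Lemma Gf_lim0 x : filterlim (Gf x) (at_point 0) (locally (Gf x 0)).
Proof. apply filterlim_locally. intros eps. unfold at_point. apply ball_center. Qed.

Lemma Gf_0 x : Gf x 0 = 0.
Proof. unfold Gf, sinh. rewrite Ropp_0, exp_0. field. Qed.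

Lemma Gf_liminf x : 0 < x -> filterlim (Gf x) (Rbar_locally p_infty) (locally 0).
Proof.
  intros Hx. set (K := x * (2 * (INR 3 / x)^3) + 2 * (INR 2 / x)^2).
  assert (HK : 0 <= K).
  { unfold K. assert (0 <= (INR 3 / x)^3) by (apply pow_le; apply Rmult_le_pos; [apply pos_INR| apply Rlt_le, Rinv_0_lt_compat; lra]).
    assert (0 <= (INR 2 / x)^2) by (apply pow_le; apply Rmult_le_pos; [apply pos_INR| apply Rlt_le, Rinv_0_lt_compat; lra]).
    nra. }
  assert (Hb : forall t, 0 <= t -> Rabs (Gf x t) <= K * exp (- t)).
  { intros t Ht. unfold Gf.
    assert (Hs : 0 <= sinh t <= cosh t).
    { unfold sinh, cosh. pose proof (exp_pos (-t)). split; [|lra].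
      assert (exp (- t) <= exp t) by (apply exp_le_m; lra). lra. }
    pose proof (cosh_ge1 t).
    pose proof (gk_bound 2 x t Hx). pose proof (gk_bound 1 x t Hx).
    unfold gk in *. pose proof (exp_pos (- x * cosh t)).
    rewrite Rabs_mult, Rabs_Ropp, Rabs_pos_eq by lra. assert (0 <= x * sinh t * cosh t) by (apply Rmult_le_pos; [apply Rmult_le_pos|]; lra). rewrite (Rabs_pos_eq (x * sinh t * cosh t + sinh t)) by lra.
    apply (Rle_trans _ (x * (exp (- x * cosh t) * cosh t ^ 2) + exp (- x * cosh t) * cosh t ^ 1)).
    - assert (x * sinh t * cosh t <= x * cosh t * cosh t) by (apply Rmult_le_compat_r; [lra|apply Rmult_le_compat_l; lra]).
      replace (x * (exp (- x * cosh t) * cosh t ^ 2) + exp (- x * cosh t) * cosh t ^ 1)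
        with (exp (- x * cosh t) * (x * cosh t * cosh t + cosh t)) by ring.
      apply Rmult_le_compat_l; lra.
    - apply (Rle_trans _ (x * (2 * (INR 3 / x)^3 * exp (-t)) + 2 * (INR 2/x)^2 * exp (-t))).
      apply Rplus_le_compat; [apply Rmult_le_compat_l; lra | lra].
      right; unfold K; ring. }
  apply filterlim_locally. intros eps.
  exists (Rmax 0 (ln ((K + 1) / eps))). intros t Ht.
  assert (Ht0 : 0 <= t) by (pose proof (Rmax_l 0 (ln ((K + 1) / eps))); lra).
  assert (Ht1 : ln ((K + 1) / eps) < t) by (pose proof (Rmax_r 0 (ln ((K + 1) / eps))); lra).
  pose proof (cond_pos eps) as He.
  assert (Hexp : exp (- t) < eps / (K + 1)).
  { rewrite exp_Ropp. replace (eps / (K+1)) with (/ ((K+1)/eps)) by (field; lra).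
    apply Rinv_lt_contravar. apply Rmult_lt_0_compat; [apply Rdiv_lt_0_compat; lra|apply exp_pos].
    rewrite <- (exp_ln ((K+1)/eps)) by (apply Rdiv_lt_0_compat; lra). apply exp_increasing; auto. }
  unfold ball; simpl. unfold AbsRing_ball, abs, minus, plus, opp; simpl.
  rewrite Ropp_0, Rplus_0_r.
  eapply Rle_lt_trans. apply Hb; auto.
  apply (Rle_lt_trans _ (K * (eps / (K + 1)))). apply Rmult_le_compat_l; lra.
  apply (Rmult_lt_reg_r (K+1)); [lra|]. field_simplify; [nra|lra].
Qed.

Lemma Fk_ode x : 0 < x -> x^2 * Fk 3 x - x * Fk 2 x - (x^2 + 1) * Fk 1 x = 0.
Proof.
  intros Hx.
  assert (DG : Derive (Gf x) = Hf x).
  { apply functional_extensionality. intro t. apply is_derive_unique, Gf_derive. }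
  assert (I : is_RInt_gen (Hf x) (at_point 0) (Rbar_locally p_infty) (0 - Gf x 0)).
  { rewrite <- DG. apply is_RInt_gen_Derive.
    - apply Filter_prod with (fun _ => True) (fun _ => True); try apply filter_true.
      intros; eexists; apply Gf_derive.
    - apply Filter_prod with (fun _ => True) (fun _ => True); try apply filter_true.
      intros; rewrite DG; apply Hf_cont.
    - apply Gf_lim0.
    - apply Gf_liminf; auto. }
  rewrite Gf_0 in I.
  destruct (Fk_spec 3 x Hx) as [I3 _]. destruct (Fk_spec 2 x Hx) as [I2 _]. destruct (Fk_spec 1 x Hx) as [I1 _].
  pose proof (is_RInt_gen_minus _ _ _ _ (is_RInt_gen_minus _ _ _ _ (is_RInt_gen_scal _ (x^2) _ I3) (is_RInt_gen_scal _ x _ I2))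
                (is_RInt_gen_scal _ (x^2+1) _ I1)) as J.
  apply (is_RInt_gen_ext _ (Hf x)) in J.
  2:{ apply Filter_prod with (fun _ => True) (fun _ => True); try apply filter_true. intros; reflexivity. }
  pose proof (is_RInt_gen_unique (V := R_CompleteNormedModule) (Fa := at_point 0) (Fb := Rbar_locally p_infty) _ _ I) as U1.
  pose proof (is_RInt_gen_unique (V := R_CompleteNormedModule) (Fa := at_point 0) (Fb := Rbar_locally p_infty) _ _ J) as U2.
  rewrite U1 in U2. clear -U2. rename U2 into J.
  simpl in J. unfold minus, plus, opp, scal in J; simpl in J. unfold mult in J; simpl in J. lra.
Qed.



Local Arguments INR _ : simpl never.
Definition pI (k : nat) : R := / (INR (Factorial.fact k) * INR (Factorial.fact (S k))).

Lemma pI_S k : pI (S k) = pI k / (INR (S k) * INR (S (S k))).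
Proof.
  unfold pI. change (Factorial.fact (S (S k))) with (S (S k) * Factorial.fact (S k))%nat.
  change (Factorial.fact (S k)) with (S k * Factorial.fact k)%nat.
  rewrite !mult_INR. pose proof (INR_fact_neq_0 k).
  assert (INR (S k) <> 0) by (apply not_0_INR; lia).
  assert (INR (S (S k)) <> 0) by (apply not_0_INR; lia).
  field. auto.
Qed.

Lemma pI_pos k : 0 < pI k.
Proof.
  unfold pI. apply Rinv_0_lt_compat. apply Rmult_lt_0_compat; apply lt_0_INR, Nat.neq_0_lt_0, Factorial.fact_neq_0.
Qed.

Lemma CV_pI : CV_radius pI = p_infty.
Proof.
  apply CV_radius_infinite_DAlembert.
  - intro k. apply Rgt_not_eq, pI_pos.
  - apply (is_lim_seq_ext (fun k => / (INR (S k) * INR (S (S k))))).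
    { intro k. rewrite pI_S. pose proof (pI_pos k).
      assert (0 < INR (S k)) by (apply lt_0_INR; lia).
      assert (0 < INR (S (S k))) by (apply lt_0_INR; lia).
      rewrite Rabs_pos_eq. field. split; lra.
      apply Rlt_le. unfold Rdiv. apply Rmult_lt_0_compat; [|apply Rinv_0_lt_compat; nra].
      apply Rmult_lt_0_compat; auto. apply Rinv_0_lt_compat; nra. }
    apply (is_lim_seq_le_le (fun _ => 0) _ (fun k => / INR (S k))).
    + intro k. assert (0 < INR (S k)) by (apply lt_0_INR; lia).
      assert (1 <= INR (S (S k))) by (rewrite S_INR; pose proof (pos_INR (S k)); lra).
      split. apply Rlt_le, Rinv_0_lt_compat; nra.
      apply Rinv_le_contravar; nra.
    + apply is_lim_seq_const.
    + apply (is_lim_seq_incr_1 (fun k => / INR k)).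
      replace (Finite 0) with (Rbar_inv p_infty) by reflexivity.
      apply is_lim_seq_inv. apply is_lim_seq_INR. discriminate.
Qed.

Lemma rad_all a : CV_radius a = p_infty -> forall x, Rbar_lt (Rabs x) (CV_radius a).
Proof. intros H x; rewrite H; exact I. Qed.

Definition P0 := PSeries pI.
Definition P1 := PSeries (PS_derive pI).
Definition P2 := PSeries (PS_derive (PS_derive pI)).

Lemma CV1 : CV_radius (PS_derive pI) = p_infty.
Proof. rewrite CV_radius_derive. apply CV_pI. Qed.
Lemma CV2 : CV_radius (PS_derive (PS_derive pI)) = p_infty.
Proof. rewrite CV_radius_derive. apply CV1. Qed.

Lemma P_ode z : z * P2 z + 2 * P1 z - P0 z = 0.
Proof.
  assert (E0 : ex_pseries pI z) by apply CV_radius_inside, rad_all, CV_pI.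
  assert (E1 : ex_pseries (PS_derive pI) z) by apply CV_radius_inside, rad_all, CV1.
  assert (E2 : ex_pseries (PS_derive (PS_derive pI)) z) by apply CV_radius_inside, rad_all, CV2.
  unfold P0, P1, P2. rewrite <- PSeries_incr_1.
  rewrite <- (PSeries_scal 2). unfold Rminus.
  replace (- PSeries pI z) with (PSeries (PS_scal (-1) pI) z) by (rewrite PSeries_scal; ring).
  rewrite <- PSeries_plus; [|apply ex_pseries_incr_1; auto|apply ex_pseries_scal; [apply Rmult_comm|auto]].
  rewrite <- PSeries_plus; [|apply ex_pseries_plus; [apply ex_pseries_incr_1; auto|apply ex_pseries_scal; [apply Rmult_comm|auto]]
                           |apply ex_pseries_scal; [apply Rmult_comm|auto]].
  rewrite <- (PSeries_const_0 z). apply PSeries_ext. intro k.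
  unfold PS_plus, PS_scal, PS_incr_1, PS_derive. simpl. unfold plus, scal, zero; simpl.
  unfold mult; simpl. destruct k as [|j].
  + rewrite pI_S. unfold INR. req. field.
  + rewrite (pI_S (S j)).
    assert (0 < INR (S (S j))) by (apply lt_0_INR; lia).
    assert (0 < INR (S (S (S j)))) by (apply lt_0_INR; lia).
    rewrite !S_INR in *. req. field. lra.
Qed.

Lemma I1_eq x : I1 x = x / 2 * P0 (x^2/4).
Proof.
  unfold I1, P0, PSeries. rewrite <- Series_scal_l. apply Series_ext. intro k.
  rewrite !Nat.add_1_r. change ((x/2)^(S (2*k))) with (x/2 * (x/2)^(2*k)).
  rewrite pow_mult. replace ((x/2)^2) with (x^2/4) by (req; field).
  unfold pI. pose proof (INR_fact_neq_0 k). pose proof (INR_fact_neq_0 (S k)).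
  req. field. auto.
Qed.

Lemma I1_fun : I1 = fun x => x / 2 * P0 (x^2/4).
Proof. apply functional_extensionality; apply I1_eq. Qed.

Lemma dP0 z : is_derive P0 z (P1 z).
Proof. apply is_derive_PSeries, rad_all, CV_pI. Qed.
Lemma dP1 z : is_derive P1 z (P2 z).
Proof. apply is_derive_PSeries, rad_all, CV1. Qed.

Definition fI1 x := P0 (x^2/4) / 2 + x^2/4 * P1 (x^2/4).
Definition fI2 x := 3 * x / 4 * P1 (x^2/4) + x^3/8 * P2 (x^2/4).

Lemma dI1 x : is_derive I1 x (fI1 x).
Proof.
  rewrite I1_fun. unfold fI1.
  assert (H0 := dP0 (x^2/4)).
  eapply is_derive_eq.
  - apply (is_derive_mult (fun x => x / 2) (fun x => P0 (x^2/4))).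
    + auto_derive; auto.
    + apply (is_derive_comp P0 (fun x => x^2/4)). exact H0. auto_derive; auto.
    + intros; apply Rmult_comm.
  - simpl. unfold plus, mult, scal; simpl. unfold mult; simpl. unfold INR. req. field.
Qed.

Lemma dfI1 x : is_derive fI1 x (fI2 x).
Proof.
  unfold fI1, fI2.
  assert (H0 := dP0 (x^2/4)). assert (H1 := dP1 (x^2/4)).
  eapply is_derive_eq.
  - apply (is_derive_plus (fun x => P0 (x^2/4) / 2) (fun x => x^2/4 * P1 (x^2/4))).
    + apply (is_derive_mult (fun x => P0 (x^2/4)) (fun x => / 2)).
      * apply (is_derive_comp P0 (fun x => x^2/4)). exact H0. auto_derive; auto.
      * apply is_derive_const.
      * intros; apply Rmult_comm.
    + apply (is_derive_mult (fun x => x^2/4) (fun x => P1 (x^2/4))).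
      * auto_derive; auto.
      * apply (is_derive_comp P1 (fun x => x^2/4)). exact H1. auto_derive; auto.
      * intros; apply Rmult_comm.
  - simpl. unfold plus, mult, scal, zero; simpl. unfold mult, plus, zero; simpl. unfold INR. req. field.
Qed.

Lemma I1_ode x : x^2 * fI2 x + x * fI1 x - (x^2+1) * I1 x = 0.
Proof.
  rewrite I1_eq. unfold fI1, fI2. pose proof (P_ode (x^2/4)) as H.
  transitivity (x^3/2 * (x^2/4 * P2 (x^2/4) + 2 * P1 (x^2/4) - P0 (x^2/4))).
  - req. field.
  - rewrite H. ring.
Qed.

Lemma Series_ge_first (a : nat -> R) : (forall k, 0 <= a k) -> ex_series a -> a 0%nat <= Series a.
Proof.
  intros Ha Hex. rewrite Series_incr_1; auto.
  assert (0 <= Series (fun k => a (S k))).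
  { assert (E: Series (fun _ : nat => 0) = 0).
    { rewrite (Series_ext (fun _ => 0) (fun k => 0 * a k)) by (intro; ring).
      rewrite Series_scal_l. ring. }
    rewrite <- E. apply Series_le. intro k; split; [lra|auto].
    apply (proj1 (ex_series_incr_1 a)); auto. }
  lra.
Qed.

Lemma P0_ge1 z : 0 <= z -> 1 <= P0 z.
Proof.
  intro Hz. unfold P0, PSeries.
  replace 1 with (pI 0 * z^0) by (unfold pI, INR; simpl; req; field).
  apply (Series_ge_first (fun k => pI k * z^k)).
  - intro k. apply Rmult_le_pos. apply Rlt_le, pI_pos. apply pow_le; auto.
  - apply ex_pseries_R. apply CV_radius_inside, rad_all, CV_pI.
Qed.

Lemma P1_ge0 z : 0 <= z -> 0 <= P1 z.
Proof.
  intro Hz. unfold P1, PSeries. eapply Rle_trans; [|apply (Series_ge_first (fun k => PS_derive pI k * z^k))].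
  - unfold PS_derive. apply Rmult_le_pos; [|apply pow_le; auto]. apply Rmult_le_pos; [apply pos_INR|apply Rlt_le, pI_pos].
  - intro k. unfold PS_derive. apply Rmult_le_pos; [|apply pow_le; auto]. apply Rmult_le_pos; [apply pos_INR|apply Rlt_le, pI_pos].
  - apply ex_pseries_R. apply CV_radius_inside, rad_all, CV1.
Qed.

Lemma I1_pos x : 0 < x -> 0 < I1 x.
Proof.
  intro Hx. rewrite I1_eq. assert (1 <= P0 (x^2/4)) by (apply P0_ge1; nra). nra.
Qed.

Lemma fI1_pos x : 0 < fI1 x.
Proof.
  unfold fI1. assert (1 <= P0 (x^2/4)) by (apply P0_ge1; nra).
  assert (0 <= P1 (x^2/4)) by (apply P1_ge0; nra). assert (0 <= x^2/4) by nra. nra.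
Qed.


Lemma K1_eq : K1 = Fk 1.
Proof.
  apply functional_extensionality. intro x. unfold K1, Fk, gk.
  f_equal. apply functional_extensionality. intro t. ring.
Qed.

Lemma dK1 x : 0 < x -> is_derive K1 x (- Fk 2 x).
Proof. intro Hx. rewrite K1_eq. apply Fk_derive; auto. Qed.

Lemma dK1' x : 0 < x -> is_derive (fun x => - Fk 2 x) x (Fk 3 x).
Proof.
  intro Hx. eapply is_derive_eq. apply (is_derive_opp (Fk 2)). apply Fk_derive; auto.
  simpl. unfold opp; simpl. ring.
Qed.

Lemma K1_ode x : 0 < x -> x^2 * Fk 3 x + x * (- Fk 2 x) - (x^2+1) * K1 x = 0.
Proof. intro Hx. rewrite K1_eq. pose proof (Fk_ode x Hx). lra. Qed.

Definition DP := fun x : R => 0 < x.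

Lemma DP_open x : DP x -> locally x DP.
Proof. intro H. apply (locally_open DP); [apply open_gt| |exact H]. auto. Qed.

Lemma y1_sol n : 0 < n ->
  sol DP (fun x => / x) (fun _ => n^2) (fun m => m * I1 (n * m)) /\
  (forall m, 0 < m -> Derive (fun m => m * I1 (n * m)) m = I1 (n * m) + n * m * fI1 (n * m)).
Proof.
  intro Hn. apply (bessel_y I1 fI1 fI2); auto.
  - intros; apply dI1.
  - intros; apply dfI1.
  - intros; apply I1_ode.
Qed.

Lemma y2_sol n : 0 < n ->
  sol DP (fun x => / x) (fun _ => n^2) (fun m => m * K1 (n * m)) /\
  (forall m, 0 < m -> Derive (fun m => m * K1 (n * m)) m = K1 (n * m) + n * m * (- Fk 2 (n * m))).
Proof.
  intro Hn. apply (bessel_y K1 (fun x => - Fk 2 x) (Fk 3)); auto.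
  - intros; apply dK1; auto.
  - intros; apply dK1'; auto.
  - intros; apply K1_ode; auto.
Qed.

Lemma W12 n : 0 < n -> Wr (fun m => m * I1 (n * m)) (fun m => m * K1 (n * m)) 1 <> 0.
Proof.
  intro Hn. unfold Wr.
  rewrite (proj2 (y1_sol n Hn) 1 ltac:(lra)), (proj2 (y2_sol n Hn) 1 ltac:(lra)).
  rewrite !Rmult_1_r. rewrite K1_eq.
  pose proof (I1_pos n Hn). pose proof (fI1_pos n). pose proof (Fk_pos 1 n Hn). pose proof (Fk_nonneg 2 n Hn).
  assert (0 < n * (I1 n * Fk 2 n + fI1 n * Fk 1 n)) by (apply Rmult_lt_0_compat; nra).
  intro E. nra.
Qed.

Lemma sol_twice M p q : sol DP p q M -> twice_diff_pos M.
Proof. intros H mu Hmu. destruct (H mu Hmu) as [a [b _]]. auto. Qed.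

Lemma sol_twice' N p q : sol (fun _ => True) p q N -> twice_diff N.
Proof. intros H nu. destruct (H nu I) as [a [b _]]. auto. Qed.

Lemma M_sol_comb n c1 c2 : 0 < n ->
  sol DP (fun x => / x) (fun _ => n^2) (fun m => c1 * m * I1 (n * m) + c2 * m * K1 (n * m)).
Proof.
  intro Hn. apply (sol_comb DP _ _ (fun m => m * I1 (n * m)) (fun m => m * K1 (n * m)) c1 c2).
  - apply DP_open.
  - apply y1_sol; auto.
  - apply y2_sol; auto.
  - intros; ring.
Qed.

Lemma N_sol_comb n c3 c4 :
  sol (fun _ => True) (fun _ => 0) (fun _ => - n^2) (fun v => c3 * cos (n * v) + c4 * sin (n * v)).
Proof.
  apply (sol_comb (fun _ => True) _ _ (fun v => cos (n * v)) (fun v => sin (n * v)) c3 c4).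
  - intros; apply filter_true.
  - apply sol_cos.
  - apply sol_sin.
  - intros; ring.
Qed.

Lemma E2_zero_iff (M N : R -> R) mu nu : twice_diff_pos M -> twice_diff N -> 0 < mu ->
  (E2 (sepR M N) mu nu = 0 <->
   Derive (Derive M) mu * N nu - / mu * Derive M mu * N nu + M mu * Derive (Derive N) nu = 0).
Proof.
  intros HM HN Hmu. rewrite E2_sep; auto.
  assert (Hp : 0 < mu^2 + nu^2) by nra.
  assert (Hs : 0 < / sqrt (mu^2+nu^2)) by (apply Rinv_0_lt_compat, sqrt_lt_R0; auto).
  assert (Hf : (mu^2+nu^2)^2 * / sqrt (mu^2+nu^2) <> 0).
  { apply Rgt_not_eq, Rmult_lt_0_compat; auto. apply pow_lt; auto. }
  split; intro H.
  - apply Rmult_integral in H. destruct H; [contradiction|auto].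
  - rewrite H. ring.
Qed.

Theorem mainTheorem2 :
  (* (1) R-separation of E^2 psi = 0 *)
  (forall M N : R -> R,
     twice_diff_pos M -> twice_diff N ->
     (forall mu, 0 < mu -> M mu <> 0) -> (forall nu, N nu <> 0) ->
     ((forall mu nu, 0 < mu -> E2 (sepR M N) mu nu = 0) <->
      exists lam : R,
        (forall mu, 0 < mu ->
           Derive (Derive M) mu / M mu - / mu * (Derive M mu / M mu) = lam) /\
        (forall nu, - (Derive (Derive N) nu / N nu) = lam))) /\
  (* (2) solutions of the separated equations for lambda = n^2 > 0 *)
  (forall n : R, 0 < n ->
     (forall M : R -> R, twice_diff_pos M ->
        ((forall mu, 0 < mu ->
            Derive (Derive M) mu - / mu * Derive M mu = n ^ 2 * M mu) <->
         exists c1 c2 : R, forall mu, 0 < mu ->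
            M mu = c1 * mu * I1 (n * mu) + c2 * mu * K1 (n * mu))) /\
     (forall N : R -> R, twice_diff N ->
        ((forall nu, Derive (Derive N) nu = - (n ^ 2) * N nu) <->
         exists c3 c4 : R, forall nu,
            N nu = c3 * cos (n * nu) + c4 * sin (n * nu)))) /\
  (* (3) the explicit separated solutions *)
  (forall n c1 c2 c3 c4 : R, 0 < n ->
     forall mu nu, 0 < mu ->
       E2 (fun m v => / sqrt (m ^ 2 + v ^ 2)
                      * (c1 * m * I1 (n * m) + c2 * m * K1 (n * m))
                      * (c3 * cos (n * v) + c4 * sin (n * v))) mu nu = 0).
Proof.
  split; [|split].
  -
    intros M N HM HN HM0 HN0. split.
    + intro H.
      assert (Q : forall mu nu, 0 < mu ->
        Derive (Derive M) mu * N nu - / mu * Derive M mu * N nu + M mu * Derive (Derive N) nu = 0).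
      { intros mu nu Hmu. apply (E2_zero_iff M N mu nu HM HN Hmu). apply H; auto. }
      exists (- (Derive (Derive N) 0 / N 0)). split.
      * intros mu Hmu. pose proof (Q mu 0 Hmu) as Q0. pose proof (HM0 mu Hmu). pose proof (HN0 0).
        apply (Rmult_eq_reg_r (M mu * N 0)); [|apply Rmult_integral_contrapositive; split; auto].
        transitivity (Derive (Derive M) mu * N 0 - / mu * Derive M mu * N 0); [field; split; lra|].
        transitivity (- (M mu * Derive (Derive N) 0)); [lra|]. field. auto.
      * intros nu. pose proof (Q 1 nu ltac:(lra)) as Q1. pose proof (Q 1 0 ltac:(lra)) as Q2.
        pose proof (HM0 1 ltac:(lra)). pose proof (HN0 0). pose proof (HN0 nu).
        assert (A : - (Derive (Derive N) nu / N nu) = (Derive (Derive M) 1 - / 1 * Derive M 1) / M 1).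
        { apply (Rmult_eq_reg_r (M 1 * N nu)); [|apply Rmult_integral_contrapositive; split; auto].
          transitivity (- (M 1 * Derive (Derive N) nu)); [field; auto|].
          transitivity (Derive (Derive M) 1 * N nu - / 1 * Derive M 1 * N nu); [lra|]. field. auto. }
        assert (B : - (Derive (Derive N) 0 / N 0) = (Derive (Derive M) 1 - / 1 * Derive M 1) / M 1).
        { apply (Rmult_eq_reg_r (M 1 * N 0)); [|apply Rmult_integral_contrapositive; split; auto].
          transitivity (- (M 1 * Derive (Derive N) 0)); [field; auto|].
          transitivity (Derive (Derive M) 1 * N 0 - / 1 * Derive M 1 * N 0); [lra|]. field. auto. }
        rewrite A, B. reflexivity.
    + intros [lam [H1 H2]] mu nu Hmu. apply (E2_zero_iff M N mu nu HM HN Hmu).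
      pose proof (HM0 mu Hmu). pose proof (HN0 nu).
      assert (Meq : Derive (Derive M) mu = lam * M mu + / mu * Derive M mu).
      { rewrite <- (H1 mu Hmu). field. split; lra. }
      assert (Neq : Derive (Derive N) nu = - lam * N nu).
      { rewrite <- (H2 nu). field. auto. }
      rewrite Meq, Neq. ring.
  -
    intros n Hn. split.
    + intros M HM. split.
      * intro H.
        assert (SM : sol DP (fun x => / x) (fun _ => n^2) M).
        { intros x Hx. destruct (HM x Hx) as [a b]. split; [auto|split; auto].
          pose proof (H x Hx). lra. }
        destruct (sol_unique DP (fun x => / x) (fun _ => n^2) (fun x => x) 1
                   (fun m => m * I1 (n * m)) (fun m => m * K1 (n * m)) M
                   constD_pos ltac:(unfold DP; lra)) as [c1 [c2 Hc]].
        -- intros x Hx. split. eapply is_derive_eq. apply is_derive_id. simpl. unfold one; simpl.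
           unfold DP in Hx. field. lra. unfold DP in Hx. lra.
        -- apply y1_sol; auto.
        -- apply y2_sol; auto.
        -- exact SM.
        -- apply W12; auto.
        -- exists c1, c2. intros mu Hmu. rewrite (Hc mu Hmu). ring.
      * intros [c1 [c2 Hc]] mu Hmu.
        assert (SM : sol DP (fun x => / x) (fun _ => n^2) M).
        { apply (sol_comb DP _ _ (fun m => m * I1 (n * m)) (fun m => m * K1 (n * m)) c1 c2 M).
          - apply DP_open.
          - apply y1_sol; auto.
          - apply y2_sol; auto.
          - intros x Hx. rewrite (Hc x Hx). ring. }
        destruct (SM mu Hmu) as [_ [_ E]]. rewrite E. ring.
    + intros N HN. split.
      * intro H.
        assert (SN : sol (fun _ => True) (fun _ => 0) (fun _ => - n^2) N).
        { intros x _. destruct (HN x) as [a b]. split; [auto|split; auto].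
          rewrite H. ring. }
        destruct (sol_unique (fun _ => True) (fun _ => 0) (fun _ => - n^2) (fun _ => 1) 0
                   (fun v => cos (n * v)) (fun v => sin (n * v)) N constD_all I) as [c3 [c4 Hc]].
        -- intros x _. split. eapply is_derive_eq. apply is_derive_const. simpl. unfold zero; simpl. ring. lra.
        -- apply sol_cos.
        -- apply sol_sin.
        -- exact SN.
        -- unfold Wr. rewrite Dsin, Dcos. rewrite Rmult_0_r, cos_0, sin_0. intro E. lra.
        -- exists c3, c4. intros nu. apply (Hc nu I).
      * intros [c3 [c4 Hc]] nu.
        assert (SN : sol (fun _ => True) (fun _ => 0) (fun _ => - n^2) N).
        { apply (sol_comb (fun _ => True) _ _ (fun v => cos (n * v)) (fun v => sin (n * v)) c3 c4 N).
          - intros; apply filter_true.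
          - apply sol_cos.
          - apply sol_sin.
          - intros x _. apply Hc. }
        destruct (SN nu I) as [_ [_ E]]. rewrite E. ring.
  -
    intros n c1 c2 c3 c4 Hn mu nu Hmu.
    set (Mc := fun m => c1 * m * I1 (n * m) + c2 * m * K1 (n * m)).
    set (Nc := fun v => c3 * cos (n * v) + c4 * sin (n * v)).
    change (E2 (sepR Mc Nc) mu nu = 0).
    pose proof (M_sol_comb n c1 c2 Hn) as SM. fold Mc in SM.
    pose proof (N_sol_comb n c3 c4) as SN. fold Nc in SN.
    apply (E2_zero_iff Mc Nc mu nu (sol_twice _ _ _ SM) (sol_twice' _ _ _ SN) Hmu).
    destruct (SM mu Hmu) as [_ [_ E1]]. destruct (SN nu I) as [_ [_ E2']].
    rewrite E1, E2'. field. lra.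
Qed.
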